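(* Under the standing setup, for every $t>0$ there exists a sequence $(\pi_n)_{n\in\mathbb N}\subset P_t$ such that $\mathcal E_{\pi_n}u_0\nearrow\mathscr S(t)u_0$ as $n\to\infty$ for all $u_0\in\mathbb R^d$.
   Context: Standing setup: $d\in\mathbb N$; vectors in $\mathbb R^d$; inequalities and suprema of vectors are componentwise; reals are identified with constant vectors. A $Q$-matrix is $q\in\mathbb R^{d\times d}$ with $q_{ii}\le0$, $q_{ij}\ge0$ ($i\ne j$), $\sum_jq_{ij}=0$. Let $\mathcal P$ be a set of $Q$-matrices and $f=(f_q)_{q\in\mathcal P}\subset\mathbb R^d$ with $\sup_{q\in\mathcal P}f_q=f_{q_0}=0$ for some $q_0\in\mathcal P$, such that $\mathcal Qu:=\sup_{q\in\mathcal P}(qu+f_q)$ is finite for every $u\in\mathbb R^d$. For $q\in\mathcal P$, $t\ge0$: $S_q(t)u_0:=e^{tq}u_0+\int_0^te^{sq}f_q\,ds$. For $h\ge0$: $\mathcal E_hu_0:=\sup_{q\in\mathcal P}S_q(h)u_0$. $P$ is the set of finite subsets $\pi\subset[0,\infty)$ with $0\in\pi$; $P_t:=\{\pi\in P:\max\pi=t\}$. For $\pi=\{t_0,\dots,t_m\}$ with $0=t_0<\dots<t_m$, $m\ge1$, $\mathcal E_\pi:=\mathcal E_{t_1-t_0}\circ\cdots\circ\mathcal E_{t_m-t_{m-1}}$, and $\mathcal E_{\{0\}}:=\mathcal E_0$. The Nisio semigroup of $(\mathcal P,f)$ is $\mathscr S(t)u_0:=\sup_{\pi\in P_t}\mathcal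 E_\pi u_0$. *)

(* Defs.v *)
From Stdlib Require Import Reals Lra Factorial List Sorting.Sorted ClassicalEpsilon.
Open Scope R_scope.

(* Vectors in R^d: functions nat -> R, only components i < d are meaningful.
   Matrices in R^{d x d}: functions nat -> nat -> R, entries i,j < d. *)
Definition vec := nat -> R.
Definition mat := nat -> nat -> R.

Fixpoint fsum (n : nat) (g : nat -> R) : R :=
  match n with O => 0 | S m => fsum m g + g m end.

Definition mat_vec (d : nat) (A : mat) (u : vec) : vec :=
  fun i => fsum d (fun j => A i j * u j).

Definition mat_mul (d : nat) (A B : mat) : mat :=
  fun i j => fsum d (fun k => A i k * B k j).

Definition mat_id : mat := fun i j => if Nat.eqb i j then 1 else 0.

Fixpoint mat_pow (d : nat) (A : mat) (k : nat) : mat :=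
  match k with O => mat_id | S m => mat_mul d (mat_pow d A m) A end.

Definition Qmatrix (d : nat) (q : mat) : Prop :=
  (forall i, (i < d)%nat -> q i i <= 0) /\
  (forall i j, (i < d)%nat -> (j < d)%nat -> i <> j -> 0 <= q i j) /\
  (forall i, (i < d)%nat -> fsum d (fun j => q i j) = 0).

(* value of a convergent series sum_{k>=0} a k (arbitrary if divergent) *)
Definition series (a : nat -> R) : R :=
  epsilon (inhabits 0) (fun l => Un_cv (fun n => fsum (S n) a) l).

Definition mat_exp (d : nat) (t : R) (q : mat) : mat :=
  fun i j => series (fun k => t ^ k / INR (Factorial.fact k) * mat_pow d q k i j).

(* Riemann integral int_a^b g (arbitrary if not integrable) *)
Definition Rint (g : R -> R) (a b : R) : R :=
  epsilon (inhabits 0)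
    (fun I => exists pr : Riemann_integrable g a b, RiemannInt pr = I).

Definition Sq (d : nat) (q : mat) (fq : vec) (t : R) (u0 : vec) : vec :=
  fun i => mat_vec d (mat_exp d t q) u0 i
           + Rint (fun s => mat_vec d (mat_exp d s q) fq i) 0 t.

(* supremum of a set of reals (arbitrary if no least upper bound exists) *)
Definition Rsup (E : R -> Prop) : R := epsilon (inhabits 0) (fun m => is_lub E m).

Definition vsup (A : vec -> Prop) : vec :=
  fun i => Rsup (fun x => exists v, A v /\ v i = x).

Definition Eh (d : nat) (P : mat -> Prop) (f : mat -> vec) (h : R) (u0 : vec) : vec :=
  vsup (fun v => exists q, P q /\ v = Sq d q (f q) h u0).

(* A partition pi = {t_0 < ... < t_m} with t_0 = 0 is encoded as the strictly
   increasing list [t_0; ...; t_m]; pi in P_t iff max pi = t_m = t. *)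
Definition in_Pt (t : R) (l : list R) : Prop :=
  exists rest, l = 0 :: rest /\ Sorted Rlt l /\ last l 0 = t.

Fixpoint Epi_aux (d : nat) (P : mat -> Prop) (f : mat -> vec)
    (t0 : R) (rest : list R) (u : vec) : vec :=
  match rest with
  | nil => u
  | t1 :: rest' => Eh d P f (t1 - t0) (Epi_aux d P f t1 rest' u)
  end.

Definition Epi (d : nat) (P : mat -> Prop) (f : mat -> vec) (l : list R) (u : vec) : vec :=
  match l with
  | nil => u
  | t0 :: nil => Eh d P f 0 u
  | t0 :: rest => Epi_aux d P f t0 rest u
  end.

Definition Nisio (d : nat) (P : mat -> Prop) (f : mat -> vec) (t : R) (u0 : vec) : vec :=
  vsup (fun v => exists l, in_Pt t l /\ v = Epi d P f l u0).

(* Main.v *)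
Require Import Defs.
From Stdlib Require Import Reals Lra Lia List Factorial Binomial ClassicalEpsilon Sorted RelationClasses.
From Coquelicot Require Import Coquelicot.
Open Scope R_scope.


Lemma fsum_ext n g h : (forall k, (k < n)%nat -> g k = h k) -> fsum n g = fsum n h.
Proof. induction n; simpl; intros H; auto. rewrite IHn by (intros; apply H; lia). rewrite H by lia. auto. Qed.

Lemma fsum_plus n g h : fsum n (fun k => g k + h k) = fsum n g + fsum n h.
Proof. induction n; simpl; [lra|rewrite IHn; lra]. Qed.

Lemma fsum_scal n c g : fsum n (fun k => c * g k) = c * fsum n g.
Proof. induction n; simpl; [lra|rewrite IHn; lra]. Qed.

Lemma fsum_scal_r n c g : fsum n (fun k => g k * c) = fsum n g * c.
Proof. induction n; simpl; [lra|rewrite IHn; lra]. Qed.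

Lemma fsum_zero n g : (forall k, (k < n)%nat -> g k = 0) -> fsum n g = 0.
Proof. intros H. rewrite (fsum_ext n g (fun _ => 0)) by auto. induction n; simpl; [lra|rewrite IHn; [lra|intros; apply H; lia]]. Qed.

Lemma fsum_le n g h : (forall k, (k < n)%nat -> g k <= h k) -> fsum n g <= fsum n h.
Proof. induction n; simpl; intros H; [lra|]. pose proof (H n (Nat.lt_succ_diag_r n)). assert (fsum n g <= fsum n h) by (apply IHn; intros; apply H; lia). lra. Qed.

Lemma fsum_nonneg n g : (forall k, (k < n)%nat -> 0 <= g k) -> 0 <= fsum n g.
Proof. intros H. replace 0 with (fsum n (fun _ => 0)). apply fsum_le; auto. apply fsum_zero; auto. Qed.

Lemma fsum_swap n m (g : nat -> nat -> R) :
  fsum n (fun i => fsum m (fun j => g i j)) = fsum m (fun j => fsum n (fun i => g i j)).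
Proof.
  induction n; simpl.
  - symmetry; apply fsum_zero; auto.
  - rewrite IHn. rewrite <- fsum_plus. auto.
Qed.

Lemma fsum_shift n g : fsum (S n) g = g 0%nat + fsum n (fun k => g (S k)).
Proof. induction n; simpl in *; [lra|]. rewrite IHn. lra. Qed.

Lemma fsum_delta_l n i x : (i < n)%nat -> fsum n (fun k => mat_id i k * x k) = x i.
Proof.
  induction n; intros H; [lia|]. simpl. unfold mat_id at 2.
  destruct (Nat.eq_dec i n).
  - subst. rewrite Nat.eqb_refl. rewrite fsum_zero. lra.
    intros k Hk. unfold mat_id. destruct (Nat.eqb_spec n k); [lia|lra].
  - rewrite IHn by lia. destruct (Nat.eqb_spec i n); [lia|lra].
Qed.

Lemma fsum_delta_r n j x : (j < n)%nat -> fsum n (fun k => x k * mat_id k j) = x j.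
Proof.
  intros H. rewrite <- (fsum_delta_l n j x H). apply fsum_ext. intros k _.
  unfold mat_id. destruct (Nat.eqb_spec k j); destruct (Nat.eqb_spec j k); subst; try lia; lra.
Qed.

Lemma fsum_sumf n g : fsum (S n) g = sum_f_R0 g n.
Proof. induction n; simpl; [lra|]. simpl in IHn. rewrite <- IHn. auto. Qed.

Lemma fsum_abs n g : Rabs (fsum n g) <= fsum n (fun k => Rabs (g k)).
Proof. induction n; simpl. rewrite Rabs_R0; lra. eapply Rle_trans; [apply Rabs_triang|]. lra. Qed.

Lemma mat_mul_assoc d A B C i j :
  mat_mul d (mat_mul d A B) C i j = mat_mul d A (mat_mul d B C) i j.
Proof.
  unfold mat_mul.
  transitivity (fsum d (fun k => fsum d (fun l => A i l * B l k * C k j))).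
  { apply fsum_ext; intros. rewrite <- fsum_scal_r. apply fsum_ext; intros; ring. }
  rewrite fsum_swap. apply fsum_ext; intros. rewrite <- fsum_scal. apply fsum_ext; intros; ring.
Qed.

Lemma mat_mul_ext_l d A A' B i j : (forall k, (k < d)%nat -> A i k = A' i k) ->
  mat_mul d A B i j = mat_mul d A' B i j.
Proof. intros H; unfold mat_mul; apply fsum_ext; intros; rewrite H; auto. Qed.

Lemma mat_mul_ext_r d A B B' i j : (forall k, (k < d)%nat -> B k j = B' k j) ->
  mat_mul d A B i j = mat_mul d A B' i j.
Proof. intros H; unfold mat_mul; apply fsum_ext; intros; rewrite H; auto. Qed.

Lemma mat_pow_add d q k l i j : (i < d)%nat -> (j < d)%nat ->
  mat_mul d (mat_pow d q k) (mat_pow d q l) i j = mat_pow d q (k + l) i j.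
Proof.
  revert i j. induction l; intros i j Hi Hj.
  - simpl. unfold mat_mul. rewrite fsum_delta_r by auto. rewrite Nat.add_0_r; auto.
  - rewrite Nat.add_succ_r. simpl.
    rewrite <- mat_mul_assoc. apply mat_mul_ext_l. intros; apply IHl; auto.
Qed.

Lemma mat_mul_vec_assoc d A B u i :
  mat_vec d (mat_mul d A B) u i = mat_vec d A (mat_vec d B u) i.
Proof.
  unfold mat_vec, mat_mul.
  transitivity (fsum d (fun k => fsum d (fun l => A i l * B l k * u k))).
  { apply fsum_ext; intros. rewrite <- fsum_scal_r. apply fsum_ext; intros; ring. }
  rewrite fsum_swap. apply fsum_ext; intros. rewrite <- fsum_scal. apply fsum_ext; intros; ring.
Qed.

Definition mK d (q : mat) := fsum d (fun m => fsum d (fun j => Rabs (q m j))).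

Lemma fsum_ge_term n g k : (k < n)%nat -> (forall l, (l < n)%nat -> 0 <= g l) -> g k <= fsum n g.
Proof.
  induction n; intros Hk H; [lia|]. simpl.
  destruct (Nat.eq_dec k n).
  - subst. assert (0 <= fsum n g) by (apply fsum_nonneg; intros; apply H; lia). lra.
  - assert (g k <= fsum n g) by (apply IHn; [lia|intros; apply H; lia]).
    assert (0 <= g n) by (apply H; lia). lra.
Qed.

Lemma mK_nonneg d q : 0 <= mK d q.
Proof. unfold mK. apply fsum_nonneg; intros. apply fsum_nonneg; intros. apply Rabs_pos. Qed.

Lemma mK_col d q j : (j < d)%nat -> fsum d (fun m => Rabs (q m j)) <= mK d q.
Proof.
  intros Hj. unfold mK. apply fsum_le. intros m Hm.
  apply (fsum_ge_term d (fun j => Rabs (q m j))); auto. intros; apply Rabs_pos.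
Qed.

Lemma mat_pow_bound d q k i j : (i < d)%nat -> (j < d)%nat -> Rabs (mat_pow d q k i j) <= (mK d q) ^ k.
Proof.
  revert i j; induction k; intros i j Hi Hj; simpl.
  - unfold mat_id. destruct (i =? j); rewrite ?Rabs_R1, ?Rabs_R0; lra.
  - unfold mat_mul. eapply Rle_trans; [apply fsum_abs|].
    eapply Rle_trans with (fsum d (fun m => mK d q ^ k * Rabs (q m j))).
    + apply fsum_le; intros. rewrite Rabs_mult. apply Rmult_le_compat_r; [apply Rabs_pos|]. apply IHk; auto.
    + rewrite fsum_scal. rewrite Rmult_comm. apply Rmult_le_compat_r.
      apply pow_le, mK_nonneg. apply mK_col; auto.
Qed.

Lemma mat_pow_rowsum d q k i : Qmatrix d q -> (i < d)%nat ->
  fsum d (fun j => mat_pow d q k i j) = if Nat.eqb k 0 then 1 else 0.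
Proof.
  intros [_ [_ Hr]] Hi. destruct k; simpl.
  - rewrite <- (fsum_delta_l d i (fun _ => 1)) by auto. apply fsum_ext; intros; ring.
  - unfold mat_mul. rewrite fsum_swap.
    apply fsum_zero. intros m Hm. rewrite fsum_scal. rewrite Hr by auto. ring.
Qed.

Lemma series_eq a l : is_series a l -> series a = l.
Proof.
  intros H. apply is_series_Reals in H. unfold infinite_sum in H.
  unfold series.
  assert (Hex : exists l, Un_cv (fun n => fsum (S n) a) l).
  { exists l. intros e He. destruct (H e He) as [N HN]. exists N. intros n Hn.
    rewrite fsum_sumf. apply HN; auto. }
  pose proof (epsilon_spec (inhabits 0) (fun l => Un_cv (fun n => fsum (S n) a) l) Hex) as H0.
  apply (UL_sequence (fun n => sum_f_R0 a n)).
  + intros e He. destruct (H0 e He) as [N HN]. exists N. intros n Hn. rewrite <- fsum_sumf. apply HN; auto.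
  + auto.
Qed.

Lemma is_series_fsum n (a : nat -> nat -> R) (l : nat -> R) :
  (forall j, (j < n)%nat -> is_series (a j) (l j)) ->
  is_series (fun k => fsum n (fun j => a j k)) (fsum n l).
Proof.
  induction n; intros H; simpl.
  - apply is_series_Reals. intros e He. exists 0%nat. intros m _.
    assert (sum_f_R0 (fun _ => fsum 0 (fun j => a j 0%nat)) m = 0).
    { simpl. induction m; simpl; auto. rewrite IHm. lra. }
    unfold R_dist. simpl in *. rewrite H0. rewrite Rminus_0_r, Rabs_R0. auto.
  - apply (is_series_plus (fun k => fsum n (fun j => a j k)) (a n)).
    apply IHn; intros; apply H; lia. apply H; lia.
Qed.

Lemma is_series_nonneg a l : is_series a l -> (forall k, 0 <= a k) -> 0 <= l.
Proof.
  intros H Hp. apply is_series_Reals in H.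
  apply Rge_le. apply (Rge_trans _ 0); [|lra].
  assert (Un_cv (fun n => sum_f_R0 a n) l) by exact H.
  assert (forall n, 0 <= sum_f_R0 a n).
  { intros n; induction n; simpl; auto. specialize (Hp (S n)); lra. }
  destruct (Rle_or_lt 0 l); [lra|].
  destruct (H0 (- l)) as [N HN]; [lra|]. specialize (HN N (le_n N)). specialize (H1 N).
  unfold R_dist in HN. rewrite Rabs_right in HN; lra.
Qed.

Lemma is_series_term_le a l n : is_series a l -> (forall k, 0 <= a k) -> a n <= l.
Proof.
  intros H Hp. apply is_series_Reals in H.
  assert (forall m, a n <= sum_f_R0 a (m + n)).
  { intros m; induction m; simpl.
    - destruct n; simpl; [lra|]. assert (0 <= sum_f_R0 a n).
      { clear -Hp. induction n; simpl; auto. specialize (Hp (S n)); lra. } lra.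
    - specialize (Hp (S (m + n))); lra. }
  destruct (Rle_or_lt (a n) l); auto.
  destruct (H ((a n) - l)) as [N HN]; [lra|]. specialize (HN (N + n)%nat ltac:(lia)).
  specialize (H0 N). unfold R_dist in HN. rewrite Rabs_right in HN; lra.
Qed.

Definition term d q t k i j := t ^ k / INR (fact k) * mat_pow d q k i j.

Lemma is_exp_series x : is_series (fun k => x ^ k / INR (fact k)) (exp x).
Proof.
  generalize (is_exp_Reals x). unfold is_pseries. apply is_series_ext.
  intros n. rewrite pow_n_pow. unfold scal; simpl. unfold mult; simpl. auto.
Qed.

Lemma term_abs_bound d q t k i j : (i < d)%nat -> (j < d)%nat ->
  Rabs (term d q t k i j) <= (mK d q * Rabs t) ^ k / INR (fact k).
Proof.
  intros Hi Hj. unfold term.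
  pose proof (mat_pow_bound d q k i j Hi Hj).
  assert (Hf : 0 < / INR (fact k)) by (apply Rinv_0_lt_compat, INR_fact_lt_0).
  assert (Ht : 0 <= Rabs t ^ k) by (apply pow_le, Rabs_pos).
  replace (t ^ k / INR (fact k) * mat_pow d q k i j) with ((t ^ k * / INR (fact k)) * mat_pow d q k i j) by (unfold Rdiv; ring).
  rewrite Rabs_mult, Rabs_mult, <- RPow_abs, (Rabs_right (/ INR (fact k))) by lra.
  unfold Rdiv. rewrite Rpow_mult_distr.
  replace (mK d q ^ k * Rabs t ^ k * / INR (fact k)) with (Rabs t ^ k * / INR (fact k) * mK d q ^ k) by ring.
  apply Rmult_le_compat_l; auto. apply Rmult_le_pos; lra.
Qed.

Lemma ex_series_abs_term d q t i j : (i < d)%nat -> (j < d)%nat ->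
  ex_series (fun k => Rabs (term d q t k i j)).
Proof.
  intros Hi Hj. apply (@ex_series_le R_AbsRing R_CompleteNormedModule _ (fun k => (mK d q * Rabs t) ^ k / INR (fact k))).
  - intros n. unfold norm; simpl. unfold abs; simpl. rewrite Rabs_Rabsolu. apply term_abs_bound; auto.
  - eexists. apply is_exp_series.
Qed.

Lemma mexp_is_series d q t i j : (i < d)%nat -> (j < d)%nat ->
  is_series (fun k => term d q t k i j) (mat_exp d t q i j).
Proof.
  intros Hi Hj.
  assert (ex_series (fun k => term d q t k i j)) by (apply ex_series_Rabs, ex_series_abs_term; auto).
  pose proof (Series_correct _ H).
  unfold mat_exp. rewrite (series_eq _ (Series (fun k => term d q t k i j))). auto.
  apply (is_series_ext _ _ _ (fun n => eq_refl) H0).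
Qed.

Lemma is_series_uniq (a : nat -> R) (l1 l2 : R) : is_series a l1 -> is_series a l2 -> l1 = l2.
Proof. intros H1 H2. rewrite <- (is_series_unique _ _ H1). apply is_series_unique; auto. Qed.

Definition mcoef d q i j k := mat_pow d q k i j / INR (fact k).

Lemma mexp_PSeries d q s i j : (i < d)%nat -> (j < d)%nat ->
  mat_exp d s q i j = PSeries (mcoef d q i j) s.
Proof.
  intros Hi Hj. unfold PSeries. symmetry. apply is_series_unique.
  apply (is_series_ext (fun k => term d q s k i j)); [|apply mexp_is_series; auto].
  intros n. unfold term, mcoef. change (s ^ n / INR (fact n) * mat_pow d q n i j = mat_pow d q n i j / INR (fact n) * s ^ n). unfold Rdiv. ring.
Qed.

Lemma mcoef_radius d q i j x : (i < d)%nat -> (j < d)%nat ->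
  Rbar_lt (Rabs x) (CV_radius (mcoef d q i j)).
Proof.
  intros Hi Hj. destruct (CV_radius_bounded (mcoef d q i j)) as [Hub _].
  apply Rbar_lt_le_trans with (Rabs x + 1). simpl; lra.
  apply Hub. exists (exp (mK d q * Rabs (Rabs x + 1))). intros n.
  replace (mcoef d q i j n * (Rabs x + 1) ^ n) with (term d q (Rabs x + 1) n i j)
    by (unfold term, mcoef; unfold Rdiv; ring).
  eapply Rle_trans. apply term_abs_bound; auto.
  apply (is_series_term_le (fun k => (mK d q * Rabs (Rabs x + 1)) ^ k / INR (fact k))).
  apply is_exp_series. intros k. apply Rmult_le_pos.
  apply pow_le, Rmult_le_pos; [apply mK_nonneg|apply Rabs_pos].
  apply Rlt_le, Rinv_0_lt_compat, INR_fact_lt_0.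
Qed.

Lemma mexp_continuous d q i j x : (i < d)%nat -> (j < d)%nat ->
  continuous (fun s => mat_exp d s q i j) x.
Proof.
  intros Hi Hj. apply (continuous_ext (PSeries (mcoef d q i j))).
  intros; symmetry; apply mexp_PSeries; auto.
  apply continuity_pt_filterlim. apply PSeries_continuity. apply mcoef_radius; auto.
Qed.

Lemma fsum_continuous n (h : nat -> R -> R) x :
  (forall j, (j < n)%nat -> continuous (h j) x) -> continuous (fun s => fsum n (fun j => h j s)) x.
Proof.
  induction n; intros H; simpl.
  - apply continuous_const.
  - apply (continuous_plus (fun s => fsum n (fun j => h j s)) (h n)).
    apply IHn; intros; apply H; lia. apply H; lia.
Qed.

Lemma mvec_continuous d q (v : vec) i x : (i < d)%nat ->
  continuous (fun s => mat_vec d (mat_exp d s q) v i) x.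
Proof.
  intros Hi. unfold mat_vec. apply (fsum_continuous d (fun j s => mat_exp d s q i j * v j)).
  intros j Hj. apply (continuous_mult (fun s => mat_exp d s q i j) (fun _ => v j)).
  apply mexp_continuous; auto. apply continuous_const.
Qed.

Lemma mexp_add d q a b i j : (i < d)%nat -> (j < d)%nat ->
  mat_exp d (a + b) q i j = fsum d (fun m => mat_exp d a q i m * mat_exp d b q m j).
Proof.
  intros Hi Hj.
  assert (H : is_series (fun n => fsum d (fun m => sum_f_R0 (fun k => term d q a k i m * term d q b (n - k) m j) n))
                        (fsum d (fun m => mat_exp d a q i m * mat_exp d b q m j))).
  { apply (is_series_fsum d (fun m n => sum_f_R0 (fun k => term d q a k i m * term d q b (n - k) m j) n)).
    intros m Hm. apply (is_series_mult (fun k => term d q a k i m) (fun k => term d q b k m j)); try apply mexp_is_series; auto; apply ex_series_abs_term; auto. }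
  apply (is_series_uniq (fun k => term d q (a + b) k i j)); [apply mexp_is_series; auto|].
  eapply is_series_ext; [|exact H]. intros n. simpl.
  transitivity (fsum (S n) (fun k => fsum d (fun m => term d q a k i m * term d q b (n - k) m j))).
  { rewrite fsum_swap. apply fsum_ext. intros; symmetry; apply fsum_sumf. }
  unfold term.
  transitivity (fsum (S n) (fun k => a ^ k / INR (fact k) * (b ^ (n - k) / INR (fact (n - k))) * mat_pow d q n i j)).
  { apply fsum_ext. intros k Hk.
    replace (mat_pow d q n i j) with (mat_pow d q (k + (n-k)) i j) by (f_equal; lia).
    rewrite <- (mat_pow_add d q k (n - k) i j Hi Hj).
    unfold mat_mul. rewrite <- fsum_scal. apply fsum_ext. intros; ring. }
  rewrite fsum_scal_r. rewrite (binomial a b n). rewrite <- fsum_sumf.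
  f_equal. unfold Rdiv. rewrite <- fsum_scal_r. apply fsum_ext. intros k Hk. unfold Binomial.C.
  pose proof (INR_fact_neq_0 n). pose proof (INR_fact_neq_0 k). pose proof (INR_fact_neq_0 (n - k)).
  field. auto.
Qed.

Lemma fsum_S n g : fsum (S n) g = fsum n g + g n.
Proof. reflexivity. Qed.

Definition Mc (q : mat) (c : R) : mat := fun i j => q i j + c * mat_id i j.

Lemma pow_Mc_binom d q c n i j : (i < d)%nat -> (j < d)%nat ->
  mat_pow d (Mc q c) n i j = fsum (S n) (fun k => Binomial.C n k * c ^ (n - k) * mat_pow d q k i j).
Proof.
  revert i j. induction n; intros i j Hi Hj.
  - simpl. unfold Binomial.C. simpl. field.
  - change (mat_pow d (Mc q c) (S n) i j) with (mat_mul d (mat_pow d (Mc q c) n) (Mc q c) i j).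
    unfold mat_mul, Mc.
    transitivity (fsum d (fun m => mat_pow d (Mc q c) n i m * q m j) + c * mat_pow d (Mc q c) n i j).
    { rewrite <- (fsum_delta_r d j (fun m => mat_pow d (Mc q c) n i m)) by auto.
      rewrite <- fsum_scal, <- fsum_plus. apply fsum_ext; intros. unfold Mc; ring. }
    rewrite (IHn i j) by auto.
    rewrite (fsum_ext d _ (fun m => fsum (S n) (fun k => Binomial.C n k * c ^ (n - k) * mat_pow d q k i m) * q m j))
      by (intros; rewrite IHn; auto).
    rewrite <- (fsum_ext d (fun m => fsum (S n) (fun k => Binomial.C n k * c ^ (n - k) * (mat_pow d q k i m * q m j)))).
    2:{ intros; rewrite <- fsum_scal_r. apply fsum_ext; intros; ring. }
    rewrite fsum_swap.
    rewrite (fsum_ext (S n) _ (fun k => Binomial.C n k * c ^ (n - k) * mat_pow d q (S k) i j)).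
    2:{ intros k _. rewrite fsum_scal. auto. }
    rewrite (fsum_shift (S n) (fun k => Binomial.C (S n) k * c ^ (S n - k) * mat_pow d q k i j)).
    rewrite (fsum_shift n (fun k => Binomial.C n k * c ^ (n - k) * mat_pow d q k i j)).
    rewrite !fsum_S.
    rewrite !C_n_0, !C_n_n. rewrite Nat.sub_diag. rewrite Nat.sub_0_r.
    rewrite (fsum_ext n (fun k => Binomial.C (S n) (S k) * c ^ (S n - S k) * mat_pow d q (S k) i j)
       (fun k => Binomial.C n k * c ^ (n - k) * mat_pow d q (S k) i j + c * (Binomial.C n (S k) * c ^ (n - S k) * mat_pow d q (S k) i j))).
    2:{ intros k Hk. rewrite <- pascal by auto. simpl (S n - S k)%nat.
        replace (n - k)%nat with (S (n - S k)) by lia. simpl. ring. }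
    rewrite fsum_plus, fsum_scal. simpl (S n - S n)%nat. rewrite Nat.sub_diag. simpl. ring.
Qed.

Lemma Mc_nonneg d q i j : Qmatrix d q -> (i < d)%nat -> (j < d)%nat -> 0 <= Mc q (mK d q) i j.
Proof.
  intros [Hd [Ho _]] Hi Hj. unfold Mc, mat_id. destruct (Nat.eqb_spec i j).
  - subst. assert (Rabs (q j j) <= mK d q).
    { eapply Rle_trans. apply (fsum_ge_term d (fun l => Rabs (q j l)) j); auto. intros; apply Rabs_pos.
      unfold mK. apply (fsum_ge_term d (fun m => fsum d (fun l => Rabs (q m l))) j); auto.
      intros; apply fsum_nonneg; intros; apply Rabs_pos. }
    pose proof (Rabs_maj2 (q j j)). lra.
  - specialize (Ho i j Hi Hj n). lra.
Qed.

Lemma pow_nonneg d (M : mat) k i j : (forall i j, (i < d)%nat -> (j < d)%nat -> 0 <= M i j) ->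
  (i < d)%nat -> (j < d)%nat -> 0 <= mat_pow d M k i j.
Proof.
  intros HM. revert i j. induction k; intros i j Hi Hj; simpl.
  - unfold mat_id; destruct (i =? j); lra.
  - unfold mat_mul. apply fsum_nonneg. intros m Hm. apply Rmult_le_pos; auto.
Qed.

Lemma mexp_nonneg d q t i j : Qmatrix d q -> 0 <= t -> (i < d)%nat -> (j < d)%nat ->
  0 <= mat_exp d t q i j.
Proof.
  intros HQ Ht Hi Hj. set (c := mK d q).
  assert (H : is_series (fun n => sum_f_R0 (fun k => term d q t k i j * ((c * t) ^ (n - k) / INR (fact (n - k)))) n)
               (mat_exp d t q i j * exp (c * t))).
  { apply (is_series_mult (fun k => term d q t k i j) (fun k => (c * t) ^ k / INR (fact k))).
    apply mexp_is_series; auto. apply is_exp_series. apply ex_series_abs_term; auto.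
    apply (ex_series_ext (fun k => (c * t) ^ k / INR (fact k))).
    intros n. rewrite Rabs_right; auto. apply Rle_ge. apply Rmult_le_pos.
    apply pow_le, Rmult_le_pos; auto; apply mK_nonneg. apply Rlt_le, Rinv_0_lt_compat, INR_fact_lt_0.
    eexists; apply is_exp_series. }
  assert (H2 : 0 <= mat_exp d t q i j * exp (c * t)).
  { apply (is_series_nonneg (fun n => term d (Mc q c) t n i j)). eapply is_series_ext; [|exact H].
    - intros n. cbv beta. rewrite <- fsum_sumf. symmetry.
      unfold term. rewrite pow_Mc_binom by auto. unfold Rdiv. rewrite <- fsum_scal. apply fsum_ext.
      intros k Hk. rewrite Rpow_mult_distr.
      replace (t ^ n) with (t ^ k * t ^ (n - k)) by (rewrite <- pow_add; f_equal; lia).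
      unfold Binomial.C.
      pose proof (INR_fact_neq_0 n). pose proof (INR_fact_neq_0 k). pose proof (INR_fact_neq_0 (n - k)).
      field. auto.
    - intros n. unfold term. apply Rmult_le_pos. apply Rmult_le_pos. apply pow_le; auto.
      apply Rlt_le, Rinv_0_lt_compat, INR_fact_lt_0.
      apply pow_nonneg; auto. intros; apply Mc_nonneg; auto. }
  pose proof (exp_pos (c * t)). nra.
Qed.

Lemma mexp_rowsum d q t i : Qmatrix d q -> (i < d)%nat -> fsum d (fun j => mat_exp d t q i j) = 1.
Proof.
  intros HQ Hi.
  assert (H : is_series (fun k => fsum d (fun j => term d q t k i j)) (fsum d (fun j => mat_exp d t q i j))).
  { apply (is_series_fsum d (fun j k => term d q t k i j)). intros; apply mexp_is_series; auto. }
  apply (is_series_uniq _ _ _ H).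
  apply is_series_Reals. intros e He. exists 0%nat. intros n _.
  assert (Hk : forall k, fsum d (fun j => term d q t k i j) = if Nat.eqb k 0 then 1 else 0).
  { intros k. unfold term. rewrite fsum_scal. pose proof (mat_pow_rowsum d q k i HQ Hi) as Hr. change (fsum d (mat_pow d q k i)) with (fsum d (fun j => mat_pow d q k i j)). rewrite Hr.
    destruct k; simpl; [field|ring]. }
  assert (sum_f_R0 (fun k => fsum d (fun j => term d q t k i j)) n = 1).
  { induction n.
    - simpl sum_f_R0. rewrite Hk. auto.
    - simpl sum_f_R0. rewrite IHn, Hk. simpl. ring. }
  unfold R_dist. rewrite H0. rewrite Rminus_diag_eq, Rabs_R0; auto.
Qed.

Lemma Rint_RInt g a b : ex_RInt g a b -> Rint g a b = RInt g a b.
Proof.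
  intros H. unfold Rint.
  assert (Hex : exists I, exists pr : Riemann_integrable g a b, RiemannInt pr = I).
  { exists (RiemannInt (ex_RInt_Reals_0 g a b H)). eexists; eauto. }
  destruct (epsilon_spec (inhabits 0) _ Hex) as [pr Hpr]. rewrite <- Hpr.
  symmetry. apply RInt_Reals.
Qed.

Lemma ex_RInt_fsum n (c : nat -> R) (h : nat -> R -> R) a b :
  (forall j, (j < n)%nat -> ex_RInt (h j) a b) ->
  ex_RInt (fun s => fsum n (fun j => c j * h j s)) a b.
Proof.
  induction n; intros H; simpl.
  - apply (ex_RInt_ext (fun _ => 0)). auto. apply ex_RInt_const.
  - apply (ex_RInt_plus (fun s => fsum n (fun j => c j * h j s)) (fun s => c n * h n s)).
    apply IHn; intros; apply H; lia.
    apply (ex_RInt_scal (h n)). apply H; lia.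
Qed.

Lemma RInt_fsum n (c : nat -> R) (h : nat -> R -> R) a b :
  (forall j, (j < n)%nat -> ex_RInt (h j) a b) ->
  RInt (fun s => fsum n (fun j => c j * h j s)) a b = fsum n (fun j => c j * RInt (h j) a b).
Proof.
  induction n; intros H; simpl.
  - rewrite RInt_const. unfold scal; simpl; unfold mult; simpl. ring.
  - rewrite (RInt_plus (fun s => fsum n (fun j => c j * h j s)) (fun s => c n * h n s)).
    2:{ apply ex_RInt_fsum; intros; apply H; lia. }
    2:{ apply (ex_RInt_scal (h n)). apply H; lia. }
    rewrite IHn by (intros; apply H; lia).
    rewrite (RInt_scal (h n)) by (apply H; lia). reflexivity.
Qed.

Definition gq d q (fq : vec) i s := mat_vec d (mat_exp d s q) fq i.

Lemma gq_ex_RInt d q fq i a b : (i < d)%nat -> ex_RInt (gq d q fq i) a b.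
Proof. intros Hi. apply (@ex_RInt_continuous R_CompleteNormedModule). intros. apply mvec_continuous; auto. Qed.

Lemma Sq_semigroup d q fq a b u i : (i < d)%nat ->
  Sq d q fq (a + b) u i = Sq d q fq a (Sq d q fq b u) i.
Proof.
  intros Hi. unfold Sq.
  change (fun s => mat_vec d (mat_exp d s q) fq i) with (gq d q fq i).
  rewrite (Rint_RInt (gq d q fq i)) by (apply gq_ex_RInt; auto).
  rewrite (Rint_RInt (gq d q fq i)) by (apply gq_ex_RInt; auto).
  unfold mat_vec at 2. rewrite (fsum_ext d _ (fun j => mat_exp d a q i j * mat_vec d (mat_exp d b q) u j
      + mat_exp d a q i j * RInt (gq d q fq j) 0 b)).
  2:{ intros j Hj. change (fun s => mat_vec d (mat_exp d s q) fq j) with (gq d q fq j).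
      rewrite Rint_RInt by (apply gq_ex_RInt; auto). ring. }
  rewrite fsum_plus.
  assert (E1 : fsum d (fun j => mat_exp d a q i j * mat_vec d (mat_exp d b q) u j) = mat_vec d (mat_exp d (a + b) q) u i).
  { change (mat_vec d (mat_exp d a q) (mat_vec d (mat_exp d b q) u) i = mat_vec d (mat_exp d (a + b) q) u i).
    rewrite <- mat_mul_vec_assoc. unfold mat_vec. apply fsum_ext. intros k Hk.
    rewrite mexp_add by auto. reflexivity. }
  rewrite E1.
  rewrite <- (RInt_fsum d (fun j => mat_exp d a q i j) (fun j => gq d q fq j)) by (intros; apply gq_ex_RInt; auto).
  assert (E3 : RInt (fun s => fsum d (fun j => mat_exp d a q i j * gq d q fq j s)) 0 b
             = RInt (fun s => gq d q fq i (1 * s + a)) 0 b).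
  { apply RInt_ext. intros s _. unfold gq.
    change (mat_vec d (mat_exp d a q) (mat_vec d (mat_exp d s q) fq) i = mat_vec d (mat_exp d (1 * s + a) q) fq i).
    rewrite <- mat_mul_vec_assoc. unfold mat_vec. apply fsum_ext. intros k Hk.
    replace (1 * s + a) with (a + s) by ring. rewrite mexp_add by auto. reflexivity. }
  rewrite E3.
  assert (E2 : RInt (fun s => gq d q fq i (1 * s + a)) 0 b = RInt (gq d q fq i) a (a + b)).
  { transitivity (RInt (fun s => scal 1 (gq d q fq i (1 * s + a))) 0 b).
    { apply RInt_ext; intros; unfold scal; simpl; unfold mult; simpl; ring. }
    pose proof (@RInt_comp_lin R_CompleteNormedModule (gq d q fq i) 1 a 0 b (gq_ex_RInt _ _ _ _ _ _ Hi)) as HH. etransitivity; [exact HH|]. f_equal; ring. }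
  rewrite E2.
  rewrite <- (RInt_Chasles (gq d q fq i) 0 a (a + b)) by (apply gq_ex_RInt; auto).
  unfold plus; simpl. ring.
Qed.

Lemma Sq_mono d q fq h u v i : Qmatrix d q -> 0 <= h -> (i < d)%nat ->
  (forall j, (j < d)%nat -> u j <= v j) -> Sq d q fq h u i <= Sq d q fq h v i.
Proof.
  intros HQ Hh Hi H. unfold Sq. apply Rplus_le_compat_r. unfold mat_vec. apply fsum_le.
  intros j Hj. apply Rmult_le_compat_l; auto. apply mexp_nonneg; auto.
Qed.

Lemma Sq_shift d q fq h u c i : Qmatrix d q -> (i < d)%nat ->
  Sq d q fq h (fun j => u j + c) i = Sq d q fq h u i + c.
Proof.
  intros HQ Hi. unfold Sq, mat_vec.
  rewrite (fsum_ext d _ (fun j => mat_exp d h q i j * u j + c * mat_exp d h q i j)) by (intros; ring).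
  rewrite fsum_plus, fsum_scal, mexp_rowsum by auto. ring.
Qed.

Lemma Sq_bound d q fq h u B i : Qmatrix d q -> 0 <= h -> (i < d)%nat ->
  (forall j, (j < d)%nat -> fq j <= 0) -> (forall j, (j < d)%nat -> u j <= B) ->
  Sq d q fq h u i <= B.
Proof.
  intros HQ Hh Hi Hf Hu.
  assert (E : Sq d q fq h u i <= Sq d q fq h (fun j => 0 + B) i) by (apply Sq_mono; auto; intros; specialize (Hu j H); lra).
  rewrite Sq_shift in E by auto.
  assert (Sq d q fq h (fun _ => 0) i <= 0).
  { unfold Sq. unfold mat_vec at 1. rewrite fsum_zero by (intros; ring).
    change (fun s => mat_vec d (mat_exp d s q) fq i) with (gq d q fq i).
    rewrite Rint_RInt by (apply gq_ex_RInt; auto).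
    assert (RInt (gq d q fq i) 0 h <= RInt (fun _ => 0) 0 h).
    { apply RInt_le; auto. apply gq_ex_RInt; auto. apply ex_RInt_const.
      intros x Hx. unfold gq, mat_vec. replace 0 with (fsum d (fun _ => 0)) by (apply fsum_zero; auto).
      apply fsum_le. intros j Hj. assert (0 <= mat_exp d x q i j) by (apply mexp_nonneg; auto; lra).
      specialize (Hf j Hj). nra. }
    rewrite RInt_const in H. unfold scal in H; simpl in H; unfold mult in H; simpl in H. lra. }
  lra.
Qed.

Lemma Rsup_spec E : bound E -> (exists x, E x) -> is_lub E (Rsup E).
Proof.
  intros Hb Hne. unfold Rsup. apply epsilon_spec.
  destruct (completeness E Hb Hne) as [m Hm]. eauto.
Qed.

Definition good d (P : mat -> Prop) (f : mat -> vec) :=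
  (forall q, P q -> Qmatrix d q) /\ (exists q0, P q0) /\
  (forall q j, P q -> (j < d)%nat -> f q j <= 0).

Definition vb d (u : vec) := fsum d (fun j => Rabs (u j)).

Lemma vb_ge d u j : (j < d)%nat -> u j <= vb d u.
Proof.
  intros Hj. eapply Rle_trans; [apply Rle_abs|]. unfold vb.
  apply (fsum_ge_term d (fun j => Rabs (u j))); auto. intros; apply Rabs_pos.
Qed.

Lemma Eh_set_lub d P f h u i : good d P f -> 0 <= h -> (i < d)%nat ->
  is_lub (fun x => exists v, (exists q, P q /\ v = Sq d q (f q) h u) /\ v i = x) (Eh d P f h u i).
Proof.
  intros [HQ [[q0 Hq0] Hf]] Hh Hi. unfold Eh, vsup. apply Rsup_spec.
  - exists (vb d u). intros x [v [[q [Hq ->]] <-]]. apply Sq_bound; auto.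
    intros; apply vb_ge; auto.
  - exists (Sq d q0 (f q0) h u i). exists (Sq d q0 (f q0) h u). eauto.
Qed.

Lemma Eh_ge d P f h u i q : good d P f -> 0 <= h -> (i < d)%nat -> P q ->
  Sq d q (f q) h u i <= Eh d P f h u i.
Proof.
  intros G Hh Hi Hq. destruct (Eh_set_lub d P f h u i G Hh Hi) as [Hub _].
  apply Hub. exists (Sq d q (f q) h u). eauto.
Qed.

Lemma Eh_le d P f h u i B : good d P f -> 0 <= h -> (i < d)%nat ->
  (forall q, P q -> Sq d q (f q) h u i <= B) -> Eh d P f h u i <= B.
Proof.
  intros G Hh Hi H. destruct (Eh_set_lub d P f h u i G Hh Hi) as [_ Hl].
  apply Hl. intros x [v [[q [Hq ->]] <-]]. auto.
Qed.

Lemma Eh_bound d P f h u B i : good d P f -> 0 <= h -> (i < d)%nat ->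
  (forall j, (j < d)%nat -> u j <= B) -> Eh d P f h u i <= B.
Proof.
  intros G Hh Hi Hu. apply Eh_le; auto. intros q Hq. destruct G as [HQ [_ Hf]].
  apply Sq_bound; auto.
Qed.

Lemma Eh_lip d P f h u v c i : good d P f -> 0 <= h -> (i < d)%nat ->
  (forall j, (j < d)%nat -> u j <= v j + c) -> Eh d P f h u i <= Eh d P f h v i + c.
Proof.
  intros G Hh Hi H. apply Eh_le; auto. intros q Hq.
  destruct G as [HQ G'].
  eapply Rle_trans. apply (Sq_mono d q (f q) h u (fun j => v j + c)); auto.
  rewrite Sq_shift by auto. apply Rplus_le_compat_r. apply Eh_ge; auto. split; auto.
Qed.

Lemma Eh_sub d P f a b u i : good d P f -> 0 <= a -> 0 <= b -> (i < d)%nat ->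
  Eh d P f (a + b) u i <= Eh d P f a (Eh d P f b u) i.
Proof.
  intros G Ha Hb Hi. apply Eh_le; auto. lra. intros q Hq.
  rewrite Sq_semigroup by auto.
  eapply Rle_trans; [|apply (Eh_ge d P f a _ i q G Ha Hi Hq)].
  destruct G as [HQ G']. apply Sq_mono; auto. intros j Hj. apply Eh_ge; auto. split; auto.
Qed.

Lemma SS_forall a l : StronglySorted Rlt (a :: l) -> forall x, In x l -> a < x.
Proof. intros H x Hx. inversion H; subst. rewrite Forall_forall in H3. auto. Qed.

Lemma SS_tail a l : StronglySorted Rlt (a :: l) -> StronglySorted Rlt l.
Proof. intros H; inversion H; auto. Qed.

Lemma last_gt a b l : StronglySorted Rlt (a :: b :: l) -> a < last (b :: l) 0.
Proof.
  revert a b. induction l; intros x y H.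
  - simpl. apply (SS_forall x (y :: nil)); simpl; auto.
  - change (last (y :: a :: l) 0) with (last (a :: l) 0). apply IHl.
    constructor. apply SS_tail, SS_tail in H; auto.
    apply Forall_forall. intros z Hz. apply (SS_forall x (y :: a :: l)); simpl in *; tauto.
Qed.

Lemma Epi_lip d P f : good d P f -> forall rest t0 u v c,
  StronglySorted Rlt (t0 :: rest) -> (forall j, (j < d)%nat -> u j <= v j + c) ->
  forall i, (i < d)%nat -> Epi_aux d P f t0 rest u i <= Epi_aux d P f t0 rest v i + c.
Proof.
  intros G rest. induction rest as [|t1 r IH]; intros t0 u v c SS H i Hi; simpl; auto.
  apply Eh_lip; auto.
  - assert (t0 < t1) by (apply (SS_forall t0 (t1 :: r)); simpl; auto). lra.
  - intros j Hj. apply IH; auto. apply SS_tail in SS; auto.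
Qed.

Lemma Epi_bnd d P f : good d P f -> forall rest t0 u B,
  StronglySorted Rlt (t0 :: rest) -> (forall j, (j < d)%nat -> u j <= B) ->
  forall i, (i < d)%nat -> Epi_aux d P f t0 rest u i <= B.
Proof.
  intros G rest. induction rest as [|t1 r IH]; intros t0 u B SS H i Hi; simpl; auto.
  apply Eh_bound; auto.
  - assert (t0 < t1) by (apply (SS_forall t0 (t1 :: r)); simpl; auto). lra.
  - intros j Hj. apply IH; auto. apply SS_tail in SS; auto.
Qed.

Lemma Epi_refine d P f : good d P f -> forall r' t0 r u i,
  StronglySorted Rlt (t0 :: r) -> StronglySorted Rlt (t0 :: r') ->
  last (t0 :: r) 0 = last (t0 :: r') 0 -> (forall x, In x r -> In x r') -> (i < d)%nat ->
  Epi_aux d P f t0 r u i <= Epi_aux d P f t0 r' u i.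
Proof.
  intros G r'. induction r' as [|t1 r2 IH]; intros t0 r u i S1 S2 HL Hin Hi.
  - destruct r as [|s r1]; [simpl; lra|]. exfalso. apply (Hin s); simpl; auto.
  - destruct r as [|s r1].
    + exfalso. pose proof (last_gt t0 t1 r2 S2).
      change (last (t0 :: t1 :: r2) 0) with (last (t1 :: r2) 0) in HL.
      change (last (t0 :: nil) 0) with t0 in HL. lra.
    + assert (Ht01 : t0 < t1) by (apply (SS_forall t0 (t1 :: r2)); simpl; auto).
      assert (Hs : t1 = s \/ In s r2) by (apply Hin; simpl; auto).
      assert (Hst : t1 <= s) by (destruct Hs; [lra|]; apply Rlt_le, (SS_forall t1 r2); auto; apply SS_tail in S2; auto).
      assert (Hr1 : forall x, In x r1 -> s < x) by (apply SS_forall; apply SS_tail in S1; auto).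
      assert (S2' : StronglySorted Rlt (t1 :: r2)) by (apply SS_tail in S2; auto).
      destruct (Rle_lt_or_eq_dec _ _ Hst) as [Hlt|Heq].
      * change (Epi_aux d P f t0 (s :: r1) u i) with (Eh d P f (s - t0) (Epi_aux d P f s r1 u) i).
        replace (s - t0) with ((t1 - t0) + (s - t1)) by ring.
        eapply Rle_trans. apply Eh_sub; auto; lra.
        change (Eh d P f (s - t1) (Epi_aux d P f s r1 u)) with (Epi_aux d P f t1 (s :: r1) u).
        simpl (Epi_aux d P f t0 (t1 :: r2) u).
        rewrite <- (Rplus_0_r (Eh d P f (t1 - t0) (Epi_aux d P f t1 r2 u) i)).
        apply Eh_lip; auto; [lra|]. intros j Hj. rewrite Rplus_0_r. apply IH; auto.
        -- constructor. apply SS_tail in S1; auto. apply Forall_forall. intros x [<-|Hx]; auto.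
           specialize (Hr1 x Hx). lra.
        -- intros x Hx. assert (t1 < x) by (destruct Hx as [<-|Hx]; auto; specialize (Hr1 x Hx); lra).
           destruct (Hin x Hx) as [<-|]; auto; lra.
      * subst s. simpl.
        rewrite <- (Rplus_0_r (Eh d P f (t1 - t0) (Epi_aux d P f t1 r2 u) i)).
        apply Eh_lip; auto; [lra|]. intros j Hj. rewrite Rplus_0_r. apply IH; auto.
        -- apply SS_tail in S1; auto.
        -- intros x Hx. specialize (Hr1 x Hx). destruct (Hin x (or_intror Hx)) as [<-|]; auto; lra.
Qed.

Lemma Rlt_Trans : Transitive Rlt.
Proof. intros x y z; apply Rlt_trans. Qed.

Lemma S2SS l : Sorted Rlt l -> StronglySorted Rlt l.
Proof. apply Sorted_StronglySorted, Rlt_Trans. Qed.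

Lemma SS_le_last l x : StronglySorted Rlt l -> In x l -> x <= last l 0.
Proof.
  induction l as [|a l IH]; intros H Hx; [inversion Hx|].
  destruct l as [|b l'].
  - simpl in *. destruct Hx as [<-|[]]; lra.
  - change (last (a :: b :: l') 0) with (last (b :: l') 0).
    destruct Hx as [<-|Hx].
    + apply Rlt_le, last_gt; auto.
    + apply IH; auto. apply SS_tail in H; auto.
Qed.

Lemma inPt_decomp t l : in_Pt t l -> 0 < t ->
  exists rest, l = 0 :: rest /\ rest <> nil /\ StronglySorted Rlt (0 :: rest) /\ last (0 :: rest) 0 = t.
Proof.
  intros [rest [-> [HS HL]]] Ht. exists rest. repeat split; auto.
  - intros ->. simpl in HL. lra.
  - apply S2SS; auto.
Qed.

Lemma Epi_eq d P f rest u : rest <> nil -> Epi d P f (0 :: rest) u = Epi_aux d P f 0 rest u.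
Proof. destruct rest; [congruence|]. reflexivity. Qed.

Fixpoint ins (x : R) (l : list R) : list R :=
  match l with
  | nil => x :: nil
  | y :: l' => if Rlt_dec x y then x :: l else if Rlt_dec y x then y :: ins x l' else l
  end.

Lemma ins_in x l z : In z (ins x l) <-> x = z \/ In z l.
Proof.
  induction l as [|y l IH]; simpl.
  - tauto.
  - destruct (Rlt_dec x y); simpl; [tauto|]. destruct (Rlt_dec y x); simpl.
    + rewrite IH. tauto.
    + assert (x = y) by lra. subst. tauto.
Qed.

Lemma ins_SS x l : StronglySorted Rlt l -> StronglySorted Rlt (ins x l).
Proof.
  induction l as [|y l IH]; intros H; simpl.
  - repeat constructor.
  - destruct (Rlt_dec x y).
    + constructor; auto. apply Forall_forall. intros z [<-|Hz]; auto.
      specialize (SS_forall y l H z Hz). lra.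
    + destruct (Rlt_dec y x); auto. constructor. apply IH. apply SS_tail in H; auto.
      apply Forall_forall. intros z Hz. apply ins_in in Hz. destruct Hz as [->|Hz]; auto.
      apply (SS_forall y l H); auto.
Qed.

Lemma ins_nil x l : ins x l <> nil.
Proof. destruct l; simpl; try congruence. destruct (Rlt_dec x r); try congruence. destruct (Rlt_dec r x); congruence. Qed.

Lemma ins_last x l : StronglySorted Rlt l -> l <> nil -> x <= last l 0 -> last (ins x l) 0 = last l 0.
Proof.
  induction l as [|y l IH]; intros H Hn Hx; [congruence|]. simpl (ins x (y :: l)).
  destruct (Rlt_dec x y).
  - reflexivity.
  - destruct (Rlt_dec y x); [|reflexivity].
    destruct l as [|z l'].
    + simpl in Hx. lra.
    + change (last (y :: z :: l') 0) with (last (z :: l') 0) in *.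
      pose proof (ins_nil x (z :: l')).
      destruct (ins x (z :: l')) as [|w ws] eqn:E; [congruence|].
      change (last (y :: w :: ws) 0) with (last (w :: ws) 0).
      apply IH; auto. apply SS_tail in H; auto. congruence.
Qed.

Lemma ins_inPt t x l : in_Pt t l -> 0 < t -> 0 <= x <= t -> in_Pt t (ins x l).
Proof.
  intros Hl Ht Hx. destruct (inPt_decomp t l Hl Ht) as [rest [-> [Hn [HS HL]]]].
  simpl. destruct (Rlt_dec x 0); [lra|]. destruct (Rlt_dec 0 x).
  - exists (ins x rest). split; auto.
    assert (HS' : StronglySorted Rlt (0 :: ins x rest)).
    { constructor. apply ins_SS. apply SS_tail in HS; auto.
      apply Forall_forall. intros z Hz. apply ins_in in Hz. destruct Hz as [->|Hz]; auto.
      apply (SS_forall 0 rest HS); auto. }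
    split. apply StronglySorted_Sorted; auto.
    destruct rest as [|a rr]; [congruence|].
    pose proof (ins_nil x (a :: rr)). destruct (ins x (a :: rr)) as [|w ws] eqn:E; [congruence|].
    change (last (0 :: w :: ws) 0) with (last (w :: ws) 0). rewrite <- E.
    change (last (0 :: a :: rr) 0) with (last (a :: rr) 0) in HL.
    rewrite ins_last. exact HL. apply SS_tail in HS; exact HS. congruence. rewrite HL; lra.
  - exists rest. split; auto. split. apply StronglySorted_Sorted; auto. auto.
Qed.

Lemma inPt_range t l x : in_Pt t l -> In x l -> 0 <= x <= t.
Proof.
  intros [rest [-> [HS HL]]] Hx. apply S2SS in HS. split.
  - destruct Hx as [<-|Hx]; [lra|]. apply Rlt_le, (SS_forall 0 rest HS); auto.
  - rewrite <- HL. apply SS_le_last; auto.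
Qed.

Lemma refine_ex t l1 l2 : 0 < t -> in_Pt t l1 -> in_Pt t l2 ->
  exists l3, in_Pt t l3 /\ incl l1 l3 /\ incl l2 l3.
Proof.
  intros Ht H1 H2.
  assert (forall m, (forall x, In x m -> 0 <= x <= t) -> exists l3, in_Pt t l3 /\ incl l1 l3 /\ incl m l3).
  { induction m as [|a m IH]; intros Hm.
    - exists l1. split; auto. split. apply incl_refl. intros x [].
    - destruct IH as [l3 [Hl3 [Hi1 Hi2]]]. intros; apply Hm; simpl; auto.
      exists (ins a l3). split. apply ins_inPt; auto. apply Hm; simpl; auto.
      split; intros x Hx; apply ins_in; auto.
      destruct Hx as [<-|Hx]; auto. }
  apply H. intros; eapply inPt_range; eauto.
Qed.

Lemma Epi_lip_Pt d P f t l u v c i : good d P f -> 0 < t -> in_Pt t l ->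
  (forall j, (j < d)%nat -> u j <= v j + c) -> (i < d)%nat ->
  Epi d P f l u i <= Epi d P f l v i + c.
Proof.
  intros G Ht Hl H Hi. destruct (inPt_decomp t l Hl Ht) as [rest [-> [Hn [HS HL]]]].
  rewrite !Epi_eq by auto. apply Epi_lip; auto.
Qed.

Lemma Epi_bnd_Pt d P f t l u B i : good d P f -> 0 < t -> in_Pt t l ->
  (forall j, (j < d)%nat -> u j <= B) -> (i < d)%nat -> Epi d P f l u i <= B.
Proof.
  intros G Ht Hl H Hi. destruct (inPt_decomp t l Hl Ht) as [rest [-> [Hn [HS HL]]]].
  rewrite !Epi_eq by auto. apply Epi_bnd; auto.
Qed.

Lemma Epi_refine_Pt d P f t l l' u i : good d P f -> 0 < t -> in_Pt t l -> in_Pt t l' ->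
  incl l l' -> (i < d)%nat -> Epi d P f l u i <= Epi d P f l' u i.
Proof.
  intros G Ht Hl Hl' Hinc Hi.
  destruct (inPt_decomp t l Hl Ht) as [rest [-> [Hn [HS HL]]]].
  destruct (inPt_decomp t l' Hl' Ht) as [rest' [-> [Hn' [HS' HL']]]].
  rewrite !Epi_eq by auto. apply Epi_refine; auto. congruence.
  intros x Hx. assert (0 < x) by (apply (SS_forall 0 rest HS); auto).
  destruct (Hinc x (or_intror Hx)) as [<-|]; auto. lra.
Qed.

Lemma Pt_triv t : 0 < t -> in_Pt t (0 :: t :: nil).
Proof.
  intros Ht. exists (t :: nil). split; [reflexivity|]. split; [|reflexivity].
  apply Sorted_cons. apply Sorted_cons; constructor. constructor; lra.
Qed.

Lemma Nisio_lub d P f t u i : good d P f -> 0 < t -> (i < d)%nat ->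
  is_lub (fun x => exists v, (exists l, in_Pt t l /\ v = Epi d P f l u) /\ v i = x) (Nisio d P f t u i).
Proof.
  intros G Ht Hi. unfold Nisio, vsup. apply Rsup_spec.
  - exists (vb d u). intros x [v [[l [Hl ->]] <-]]. apply (Epi_bnd_Pt d P f t); auto.
    intros; apply vb_ge; auto.
  - exists (Epi d P f (0 :: t :: nil) u i). eexists. split; eauto. exists (0 :: t :: nil). split; auto. apply Pt_triv; auto.
Qed.

Lemma Nisio_ge d P f t l u i : good d P f -> 0 < t -> (i < d)%nat -> in_Pt t l ->
  Epi d P f l u i <= Nisio d P f t u i.
Proof.
  intros G Ht Hi Hl. destruct (Nisio_lub d P f t u i G Ht Hi) as [Hub _]. apply Hub. eauto.
Qed.

Lemma Nisio_approx d P f t u i e : good d P f -> 0 < t -> (i < d)%nat -> 0 < e ->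
  exists l, in_Pt t l /\ Nisio d P f t u i - e < Epi d P f l u i.
Proof.
  intros G Ht Hi He. destruct (Nisio_lub d P f t u i G Ht Hi) as [Hub Hl].
  apply NNPP. intros Hno.
  assert (Nisio d P f t u i <= Nisio d P f t u i - e).
  { apply Hl. intros x [v [[l [Hl' ->]] <-]]. apply Rnot_lt_le. intros Hc. apply Hno. eauto. }
  lra.
Qed.

Lemma Nisio_lip d P f t u v c i : good d P f -> 0 < t -> (i < d)%nat ->
  (forall j, (j < d)%nat -> u j <= v j + c) -> Nisio d P f t u i <= Nisio d P f t v i + c.
Proof.
  intros G Ht Hi H. destruct (Nisio_lub d P f t u i G Ht Hi) as [_ Hl].
  assert (Nisio d P f t u i <= Nisio d P f t v i + c); auto.
  apply Hl. intros x [w [[l [Hl' ->]] <-]].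
  eapply Rle_trans. apply (Epi_lip_Pt d P f t l u v c i); auto.
  apply Rplus_le_compat_r. apply Nisio_ge; auto.
Qed.

Lemma floor_ex y : 0 <= y -> exists k : nat, INR k <= y < INR k + 1.
Proof.
  intros Hy. destruct (INR_archimed 1 y) as [N HN]; [lra|]. rewrite Rmult_1_r in HN.
  revert HN. induction N; intros HN.
  - simpl in HN. lra.
  - destruct (Rlt_or_le y (INR N)) as [H|H].
    + apply IHN. lra.
    + exists N. rewrite S_INR in HN. lra.
Qed.

Definition grid (n : nat) : list R :=
  map (fun k => INR k / (INR n + 1) - INR n) (seq 0 (S (2 * n * S n))).

Lemma grid_approx n x : Rabs x <= INR n -> exists g, In g (grid n) /\ Rabs (g - x) <= / (INR n + 1).
Proof.
  intros Hx. assert (Hm : 0 < INR n + 1) by (pose proof (pos_INR n); lra).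
  pose proof (Rle_abs x). pose proof (Rle_abs (- x)). rewrite Rabs_Ropp in H0.
  set (y := (x + INR n) * (INR n + 1)).
  assert (Hy : 0 <= y) by (unfold y; apply Rmult_le_pos; lra).
  destruct (floor_ex y Hy) as [k Hk].
  exists (INR k / (INR n + 1) - INR n). split.
  - apply (in_map (fun k => INR k / (INR n + 1) - INR n)). apply in_seq. split; [lia|].
    assert (HH : INR k <= INR (2 * n * S n)).
    { rewrite mult_INR, mult_INR, (S_INR n). replace (INR 2) with 2 by (simpl; ring).
      assert (y <= 2 * INR n * (INR n + 1)). { unfold y. apply Rmult_le_compat_r; lra. } lra. }
    apply INR_le in HH. lia.
  - assert (HE : INR k / (INR n + 1) - INR n - x = (INR k - y) / (INR n + 1)) by (unfold y; field; lra).
    rewrite HE. unfold Rdiv. rewrite Rabs_mult. rewrite (Rabs_right (/ (INR n + 1))).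
    2:{ apply Rle_ge, Rlt_le, Rinv_0_lt_compat; auto. }
    assert (Rabs (INR k - y) <= 1) by (apply Rabs_le; lra).
    assert (0 < / (INR n + 1)) by (apply Rinv_0_lt_compat; auto). nra.
Qed.

Fixpoint vecs (n : nat) (g : list R) : list vec :=
  match n with
  | O => (fun _ => 0) :: nil
  | S m => flat_map (fun v => map (fun x => fun j => if Nat.eqb j m then x else v j) g) (vecs m g)
  end.

Lemma vecs_approx n g (u : vec) e : (forall j, (j < n)%nat -> exists x, In x g /\ Rabs (x - u j) <= e) ->
  exists v, In v (vecs n g) /\ forall j, (j < n)%nat -> Rabs (v j - u j) <= e.
Proof.
  induction n; intros H.
  - exists (fun _ => 0). split; simpl; auto. intros; lia.
  - destruct IHn as [v [Hv Hv']]. intros; apply H; lia.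
    destruct (H n (Nat.lt_succ_diag_r n)) as [x [Hx Hx']].
    exists (fun j => if Nat.eqb j n then x else v j). split.
    + simpl. apply in_flat_map. exists v. split; auto. apply (in_map (fun x => fun j => if Nat.eqb j n then x else v j)); auto.
    + intros j Hj. destruct (Nat.eqb_spec j n); subst; auto. apply Hv'. lia.
Qed.

Lemma fin_refine {A : Type} t (Q : A -> list R -> Prop) (L : list A) : 0 < t ->
  (forall a l l', Q a l -> in_Pt t l -> in_Pt t l' -> incl l l' -> Q a l') ->
  (forall a, In a L -> exists l, in_Pt t l /\ Q a l) ->
  forall l0, in_Pt t l0 -> exists l, in_Pt t l /\ incl l0 l /\ forall a, In a L -> Q a l.
Proof.
  intros Ht HQ. induction L as [|a L IH]; intros Hex l0 Hl0.
  - exists l0. split; auto. split. apply incl_refl. intros a [].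
  - destruct (IH (fun b Hb => Hex b (or_intror Hb)) l0 Hl0) as [l1 [H1 [Hi1 HQ1]]].
    destruct (Hex a (or_introl eq_refl)) as [la [Hla HQa]].
    destruct (refine_ex t l1 la Ht H1 Hla) as [l3 [H3 [Hi13 Hia3]]].
    exists l3. split; auto. split. eapply incl_tran; eauto.
    intros b [<-|Hb]. eapply HQ; eauto. eapply HQ; eauto.
Qed.

Definition goodP d P f t n l := forall v i, In v (vecs d (grid n)) -> (i < d)%nat ->
  Nisio d P f t v i - / (INR n + 1) < Epi d P f l v i.

Lemma step d P f t n l0 : good d P f -> 0 < t -> in_Pt t l0 ->
  exists l, in_Pt t l /\ incl l0 l /\ goodP d P f t n l.
Proof.
  intros G Ht Hl0.
  assert (Hn : 0 < / (INR n + 1)) by (apply Rinv_0_lt_compat; pose proof (pos_INR n); lra).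
  set (Q := fun (a : vec * nat) l => (snd a < d)%nat -> Nisio d P f t (fst a) (snd a) - / (INR n + 1) < Epi d P f l (fst a) (snd a)).
  assert (HQm : forall a l l', Q a l -> in_Pt t l -> in_Pt t l' -> incl l l' -> Q a l').
  { intros [v i] l l' H Hl Hl' Hll' Hi. unfold Q in *. simpl in *. specialize (H Hi).
    eapply Rlt_le_trans; [exact H|]. apply (Epi_refine_Pt d P f t l l' v i G Ht Hl Hl' Hll' Hi). }
  assert (HQe : forall a, In a (list_prod (vecs d (grid n)) (seq 0 d)) -> exists l, in_Pt t l /\ Q a l).
  { intros [v i] _. unfold Q; simpl. destruct (Nat.lt_ge_cases i d) as [Hi|Hi].
    + destruct (Nisio_approx d P f t v i (/ (INR n + 1)) G Ht Hi Hn) as [l [Hl H]]. exists l. split; auto.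
    + exists (0 :: t :: nil). split. apply Pt_triv; auto. intros; lia. }
  destruct (fin_refine t Q _ Ht HQm HQe l0 Hl0) as [l [Hl [Hinc HQ]]].
  exists l. split; auto. split; auto. intros v i Hv Hi.
  apply (HQ (v, i)); auto. apply in_prod; auto. apply in_seq. lia.
Qed.

Fixpoint pis d P f t n : list R :=
  match n with
  | O => epsilon (inhabits nil) (fun l => in_Pt t l /\ goodP d P f t 0 l)
  | S m => epsilon (inhabits nil) (fun l => in_Pt t l /\ incl (pis d P f t m) l /\ goodP d P f t (S m) l)
  end.

Lemma pis_spec d P f t : good d P f -> 0 < t -> forall n,
  in_Pt t (pis d P f t n) /\ goodP d P f t n (pis d P f t n) /\
  incl (pis d P f t n) (pis d P f t (S n)) /\ in_Pt t (pis d P f t (S n)).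
Proof.
  intros G Ht.
  assert (H0 : forall n, in_Pt t (pis d P f t n) /\ goodP d P f t n (pis d P f t n)).
  { induction n.
    - simpl. apply epsilon_spec. destruct (step d P f t 0 (0 :: t :: nil) G Ht (Pt_triv t Ht)) as [l [? [? ?]]]. eauto.
    - simpl. assert (in_Pt t (epsilon (inhabits nil) (fun l => in_Pt t l /\ incl (pis d P f t n) l /\ goodP d P f t (S n) l)) /\
         incl (pis d P f t n) (epsilon (inhabits nil) (fun l => in_Pt t l /\ incl (pis d P f t n) l /\ goodP d P f t (S n) l)) /\
         goodP d P f t (S n) (epsilon (inhabits nil) (fun l => in_Pt t l /\ incl (pis d P f t n) l /\ goodP d P f t (S n) l))).
      { apply epsilon_spec. destruct IHn as [IH _]. destruct (step d P f t (S n) _ G Ht IH) as [l [? [? ?]]]. eauto. }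
      tauto. }
  intros n. split; [apply H0|]. split; [apply H0|]. split; [|apply H0].
  simpl. assert (in_Pt t (epsilon (inhabits nil) (fun l => in_Pt t l /\ incl (pis d P f t n) l /\ goodP d P f t (S n) l)) /\
         incl (pis d P f t n) (epsilon (inhabits nil) (fun l => in_Pt t l /\ incl (pis d P f t n) l /\ goodP d P f t (S n) l)) /\
         goodP d P f t (S n) (epsilon (inhabits nil) (fun l => in_Pt t l /\ incl (pis d P f t n) l /\ goodP d P f t (S n) l))).
  { apply epsilon_spec. destruct (H0 n) as [IH _]. destruct (step d P f t (S n) _ G Ht IH) as [l [? [? ?]]]. eauto. }
  tauto.
Qed.

Theorem mainTheorem6
  (d : nat) (P : mat -> Prop) (f : mat -> vec) (q0 : mat)
  (HQ : forall q, P q -> Qmatrix d q)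
  (Hq0 : P q0)
  (Hf0 : forall i, (i < d)%nat -> f q0 i = 0)
  (Hsupf : forall i, (i < d)%nat -> is_lub (fun x => exists q, P q /\ x = f q i) 0)
  (Hfin : forall (u : vec) i, (i < d)%nat ->
     bound (fun x => exists q, P q /\ x = mat_vec d q u i + f q i))
  (t : R) (Ht : 0 < t) :
  exists pis : nat -> list R,
    (forall n, in_Pt t (pis n)) /\
    forall (u0 : vec) i, (i < d)%nat ->
      (forall n, Epi d P f (pis n) u0 i <= Epi d P f (pis (S n)) u0 i) /\
      Un_cv (fun n => Epi d P f (pis n) u0 i) (Nisio d P f t u0 i).
Proof.
  assert (G : good d P f).
  { split; auto. split; eauto. intros q j Hq Hj. destruct (Hsupf j Hj) as [Hub _]. apply Hub. eauto. }
  pose proof (pis_spec d P f t G Ht) as PS.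
  exists (pis d P f t). split; [intros n; apply PS|].
  intros u0 i Hi. split.
  - intros n. destruct (PS n) as [H1 [_ [H3 H4]]]. apply (Epi_refine_Pt d P f t); auto.
  - intros e He.
    destruct (INR_archimed 1 (Rmax (vb d u0) (3 / e))) as [N HN]; [lra|]. rewrite Rmult_1_r in HN.
    pose proof (Rmax_l (vb d u0) (3 / e)). pose proof (Rmax_r (vb d u0) (3 / e)).
    exists N. intros n Hn. apply le_INR in Hn.
    set (dl := / (INR n + 1)).
    assert (Hdl : 0 < dl) by (unfold dl; apply Rinv_0_lt_compat; pose proof (pos_INR n); lra).
    assert (Hg : forall j, (j < d)%nat -> exists x, In x (grid n) /\ Rabs (x - u0 j) <= dl).
    { intros j Hj. apply grid_approx.
      assert (Rabs (u0 j) <= vb d u0).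
      { unfold vb. apply (fsum_ge_term d (fun j => Rabs (u0 j))); auto. intros; apply Rabs_pos. }
      lra. }
    destruct (vecs_approx d (grid n) u0 dl Hg) as [v [Hv Hvu]].
    destruct (PS n) as [Hl [Hgood _]].
    specialize (Hgood v i Hv Hi). fold dl in Hgood.
    assert (E1 : Epi d P f (pis d P f t n) v i <= Epi d P f (pis d P f t n) u0 i + dl).
    { apply (Epi_lip_Pt d P f t); auto. intros j Hj. specialize (Hvu j Hj). pose proof (Rle_abs (v j - u0 j)). pose proof (Rle_abs (- (v j - u0 j))). rewrite Rabs_Ropp in *. lra. }
    assert (E2 : Nisio d P f t u0 i <= Nisio d P f t v i + dl).
    { apply Nisio_lip; auto. intros j Hj. specialize (Hvu j Hj). pose proof (Rle_abs (v j - u0 j)). pose proof (Rle_abs (- (v j - u0 j))). rewrite Rabs_Ropp in *. lra. }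
    assert (E3 : Epi d P f (pis d P f t n) u0 i <= Nisio d P f t u0 i) by (apply Nisio_ge; auto).
    assert (E4 : 3 * dl < e).
    { unfold dl. assert (3 / e < INR n + 1) by lra.
      assert (3 < e * (INR n + 1)).
      { apply (Rmult_lt_compat_l e) in H1; auto. unfold Rdiv in H1. rewrite <- Rmult_assoc, (Rmult_comm e 3), Rmult_assoc, Rinv_r in H1 by lra. lra. }
      assert (0 < INR n + 1) by (pose proof (pos_INR n); lra).
      apply (Rmult_lt_reg_r (INR n + 1)); auto. rewrite Rmult_assoc, Rinv_l by lra. lra. }
    unfold R_dist. rewrite Rabs_left1 by lra. lra.
Qed.
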